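(* Let $\mathcal A\in\mathbb R^{n\times p\times l}$ with $n\ge p$, and let $\mathcal A=\mathcal U*\mathcal S*\mathcal V^\top$ be a compact t-SVD of $\mathcal A$. Then $\mathcal P=\mathcal U*\mathcal V^\top$ (the $\mathcal P$-factor of the t-polar decomposition of $\mathcal A$) is an optimal solution of $\max_{\mathcal P\in\mathrm{St}(n,p,l)}\langle\mathcal A,\mathcal P\rangle$.
   Context: Frontal slices $A^{(i)}=\mathcal A(:,:,i)$. The t-product is $\mathcal A*\mathcal B=\operatorname{fold}(\operatorname{bcirc}(\mathcal A)\operatorname{unfold}(\mathcal B))$, where $\operatorname{bcirc}(\mathcal A)$ is the block circulant matrix with $(i,j)$ block $A^{(((i-j)\bmod l)+1)}$, $\operatorname{unfold}$ stacks frontal slices vertically, $\operatorname{fold}$ is its inverse. Transpose: $\mathcal A^\top$ has frontal slices $(A^{(1)})^\top,(A^{(l)})^\top,\dots,(A^{(2)})^\top$. $\mathcal I$ identity tensor. $\mathrm{St}(n,p,l)=\{\mathcal X\in\mathbb R^{n\times p\times l}:\mathcal X^\top*\mathcal X=\mathcal I\}$; a tensor $\mathcal V\in\mathbb R^{p\times p\times l}$ is orthogonal if $\mathcal V^\top*\mathcal V=\mathcal V*\mathcal V^\top=\mathcal I$. $\langle\mathcal A,\mathcal B\rangle=\sum a_{ijk}b_{ijk}$. The DFT $L(\mathcal A)$ has frontal slices $\sum_{j=1}^l\omega^{(k-1)(j-1)}A^{(j)}$, $\omega=e^{-2\pi\mathrm i/l}$. A compact t-SVD of $\mathcal A$ is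 a factorization $\mathcal A=\mathcal U*\mathcal S*\mathcal V^\top$ with $\mathcal U\in\mathrm{St}(n,p,l)$, $\mathcal V\in\mathbb R^{p\times p\times l}$ orthogonal and $\mathcal S\in\mathbb R^{p\times p\times l}$ f-diagonal (every frontal slice diagonal), where, by the paper's convention, the frontal slices of $L(\mathcal S)$ are diagonal with nonnegative real entries. *)

(* Defs.v *)
From mathcomp Require Import all_boot all_algebra.
From mathcomp Require Import complex.
From mathcomp Require Import reals trigo.
Set Implicit Arguments.
Unset Strict Implicit.
Unset Printing Implicit Defensive.
Import GRing.Theory Num.Theory.
Local Open Scope ring_scope.

(* A third-order tensor in R^{m x q x l}, given by its l frontal slices.
   Slice index k : 'I_l corresponds to the paper's slice k+1. *)
Definition tensor (R : Type) (m q l : nat) := {ffun 'I_l -> 'M[R]_(m, q)}.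

Lemma ord_pos (l : nat) (i : 'I_l) : (0 < l)%N.
Proof. by apply: leq_ltn_trans (ltn_ord i). Qed.

Definition ord_subm (l : nat) (i j : 'I_l) : 'I_l :=
  Ordinal (ltn_pmod (i + l - j)%N (ord_pos i)).
Definition ord_negm (l : nat) (k : 'I_l) : 'I_l :=
  Ordinal (ltn_pmod (l - k)%N (ord_pos k)).

Section Tensors.
Variable R : realType.

(* t-product: fold(bcirc(A) unfold(B)); the (i,j) block of bcirc(A) is the slice (i-j) mod l *)
Definition tprod (m q r l : nat) (A : tensor R m q l) (B : tensor R q r l)
  : tensor R m r l :=
  [ffun i => \sum_(j < l) A (ord_subm i j) *m B j].

(* t-transpose: slices (A^(1))^T, (A^(l))^T, ..., (A^(2))^T *)
Definition ttr (m q l : nat) (A : tensor R m q l) : tensor R q m l :=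
  [ffun k => (A (ord_negm k))^T].

Definition tid (q l : nat) : tensor R q q l :=
  [ffun k => if (val k == 0)%N then 1%:M else 0].

Definition tinner (m q l : nat) (A B : tensor R m q l) : R :=
  \sum_(k < l) \sum_(i < m) \sum_(j < q) A k i j * B k i j.

Definition tStiefel (n p l : nat) (X : tensor R n p l) : Prop :=
  tprod (ttr X) X = tid p l.

Definition torthogonal (p l : nat) (V : tensor R p p l) : Prop :=
  tprod (ttr V) V = tid p l /\ tprod V (ttr V) = tid p l.

Definition fdiagonal (m q l : nat) (S : tensor R m q l) : Prop :=
  forall k, is_diag_mx (S k).

Definition omega (l : nat) : R[i] :=
  (cos (2 * pi / l%:R) +i* (- sin (2 * pi / l%:R)))%C.

Definition tdft (m q l : nat) (A : tensor R m q l) : {ffun 'I_l -> 'M[R[i]]_(m, q)} :=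
  [ffun k : 'I_l => \sum_(j < l) omega l ^+ (k * j)%N *: map_mx (fun x => x%:C%C) (A j)].

(* Compact t-SVD of A: A = U * S * V^T, U in St(n,p,l), V orthogonal, S f-diagonal,
   and the frontal slices of L(S) are diagonal with nonnegative real entries. *)
Definition compact_tSVD (n p l : nat) (A : tensor R n p l)
  (U : tensor R n p l) (S V : tensor R p p l) : Prop :=
  [/\ tStiefel U, torthogonal V, fdiagonal S,
      (forall k : 'I_l, is_diag_mx (tdft S k) /\
         forall i : 'I_p, 0 <= tdft S k i i)
    & A = tprod (tprod U S) (ttr V)].

End Tensors.

(* Main.v *)
Require Import Defs.
From mathcomp Require Import all_boot all_order all_algebra.
From mathcomp Require Import complex.
From mathcomp Require Import reals trigo.
From mathcomp Require Import ring lra zify.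
Import Order.TTheory GRing.Theory Num.Theory.
Local Open Scope ring_scope.
Local Open Scope complex_scope.
Set Implicit Arguments.
Unset Strict Implicit.
Unset Printing Implicit Defensive.

Section Om.
Variable R : realType.
Variable l : nat.
Hypothesis l0 : (0 < l)%N.
Local Notation t := (2 * pi / l%:R : R).

Lemma omega_exp (m : nat) : omega R l ^+ m = (cos (m%:R * t) -i* sin (m%:R * t)).
Proof.
elim: m => [|m IH]; first by rewrite expr0 mul0r cos0 sin0 oppr0.
rewrite exprS IH /omega; set t := (2 * pi / _).
rewrite -[m.+1]addn1 natrD mulrDl mul1r cosD sinD.
apply/eqP; rewrite eq_complex /=; apply/andP; split; apply/eqP; ring.
Qed.

Local Notation w := (omega R l).

Lemma omega_l : w ^+ l = 1.
Proof.
rewrite omega_exp.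
have -> : l%:R * t = pi *+ 2.
  rewrite mulrCA mulfV; first by rewrite mulr1 mulr_natl.
  by rewrite pnatr_eq0 -lt0n.
by rewrite cos2pi sin2pi oppr0.
Qed.

Lemma omega_mod m : w ^+ m = w ^+ (m %% l).
Proof.
by rewrite {1}(divn_eq m l) exprD mulnC exprM omega_l expr1n mul1r.
Qed.

Lemma omega_neq1 r : (0 < r < l)%N -> w ^+ r != 1.
Proof.
move=> /andP [r0 rl]; rewrite omega_exp; apply/negP => /eqP [] hc _.
pose x : R := r%:R * pi / l%:R.
have hx : 0 < x < pi.
  have lp : (0 : R) < l%:R by rewrite ltr0n.
  rewrite /x; apply/andP; split.
    by rewrite divr_gt0 // mulr_gt0 ?pi_gt0 // ltr0n.
  by rewrite ltr_pdivrMr // mulrC ltr_pM2l ?pi_gt0 // ltr_nat.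
have := sin_gt0_pi hx.
have : cos (x *+ 2) = 1.
  by rewrite -hc /x mulr2n; congr cos; rewrite -mulr2n -mulr_natr; field; rewrite pnatr_eq0 -lt0n.
rewrite cos_mulr2n cos2sin2 => h1 h2.
have : sin x ^+ 2 = 0 by lra.
by move/eqP; rewrite sqrf_eq0 => /eqP h; rewrite h ltxx in h2.
Qed.

Lemma sum_omega m : \sum_(k < l) w ^+ (k * m) = if (l %| m)%N then l%:R else 0.
Proof.
case: ifP => hd.
  rewrite (eq_bigr (fun _ => 1)) ?sumr_const ?card_ord // => k _.
  have /eqP hk : (l %| k * m)%N by rewrite dvdn_mull.
  by rewrite omega_mod hk expr0.
have hz : w ^+ m != 1.
  rewrite omega_mod omega_neq1 // ltn_pmod // andbT lt0n.
  by rewrite /dvdn in hd; rewrite hd.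
have geo : forall (z : R[i]) n, (1 - z) * \sum_(k < n) z ^+ k = 1 - z ^+ n.
  move=> z; elim=> [|n IH]; first by rewrite big_ord0 mulr0 expr0 subrr.
  by rewrite big_ord_recr /= mulrDr IH exprS; ring.
have : (1 - w ^+ m) * \sum_(k < l) w ^+ (k * m) = 0.
  under eq_bigr do rewrite mulnC exprM.
  by rewrite geo -exprM mulnC exprM omega_l expr1n subrr.
by move/eqP; rewrite mulf_eq0 subr_eq0 eq_sym (negbTE hz) /= => /eqP.
Qed.

Lemma omega_normM : w^*%C * w = 1.
Proof.
rewrite /omega /=; apply/eqP; rewrite eq_complex /=; apply/andP; split; apply/eqP.
  by transitivity (cos t ^+ 2 + sin t ^+ 2); [ring | exact: cos2Dsin2].
ring.
Qed.

Lemma omega_conj a b : (l %| a + b)%N -> (w ^+ a)^*%C = w ^+ b.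
Proof.
move=> h.
have : (w ^+ a)^*%C * (w ^+ a * w ^+ b) = w ^+ b.
  by rewrite rmorphXn mulrA -exprMn omega_normM expr1n mul1r.
by rewrite -exprD [w ^+ (a + b)]omega_mod (eqP h) expr0 mulr1.
Qed.
End Om.

Section Ctr.
Variable R : realType.
Definition ctr m q (M : 'M[R[i]]_(m, q)) : 'M[R[i]]_(q, m) := (map_mx conjc M)^T.

Lemma ctrE m q (M : 'M[R[i]]_(m, q)) a b : ctr M a b = conjc (M b a).
Proof. by rewrite !mxE. Qed.

Lemma ctrM m q r (M : 'M[R[i]]_(m, q)) (N : 'M[R[i]]_(q, r)) :
  ctr (M *m N) = ctr N *m ctr M.
Proof. by rewrite /ctr (map_mxM conjc) trmx_mul. Qed.

Lemma ctrK m q (M : 'M[R[i]]_(m, q)) : ctr (ctr M) = M.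
Proof. by apply/matrixP => a b; rewrite !ctrE conjcK. Qed.

Lemma ctr1 m : ctr (1%:M : 'M[R[i]]_m) = 1%:M.
Proof. by rewrite /ctr (map_mx1 conjc) trmx1. Qed.

Lemma ctrB m q (M N : 'M[R[i]]_(m, q)) : ctr (M - N) = ctr M - ctr N.
Proof. by apply/matrixP => a b; rewrite !(ctrE, mxE) rmorphB. Qed.
End Ctr.

Section DFT.
Variable R : realType.
Variable l : nat.
Hypothesis l0 : (0 < l)%N.
Local Notation w := (omega R l).
Local Notation Cm M := (map_mx (fun x : R => x%:C) M).

Definition ord_addm (a j : 'I_l) : 'I_l := Ordinal (ltn_pmod (a + j)%N l0).
Definition z0 : 'I_l := Ordinal l0.

Lemma subm_addm a j : ord_subm (ord_addm a j) j = a.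
Proof.
apply/val_inj => /=.
rewrite -addnBA; last by apply: ltnW.
by rewrite modnDml -addnA subnKC ?(ltnW (ltn_ord j)) // modnDr modn_small.
Qed.

Lemma addm_inj j : injective (fun a => ord_addm a j).
Proof. by move=> a b /= h; rewrite -(subm_addm a j) h subm_addm. Qed.

Lemma negmK (a : 'I_l) : ord_negm (ord_negm a) = a.
Proof.
apply/val_inj => /=.
case: (posnP a) => [->|ha]; first by rewrite subn0 modnn subn0 modnn.
rewrite (modn_small (_ : l - a < l)%N); last lia.
by rewrite subKn ?modn_small // ltnW.
Qed.

Lemma negm_inj : injective (@ord_negm l).
Proof. by move=> a b h; rewrite -(negmK a) h negmK. Qed.

Lemma negm_subm0 (j : 'I_l) : ord_negm (ord_subm z0 j) = j.
Proof.
rewrite -[RHS]negmK; congr ord_negm; apply/val_inj => /=.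
by rewrite add0n.
Qed.

Lemma dvd_negm (a : 'I_l) : (l %| a + ord_negm a)%N.
Proof.
rewrite /dvdn /= modnDmr subnKC ?modnn // ltnW //.
Qed.

Lemma tdftE m q (A : tensor R m q l) k :
  tdft A k = \sum_(j < l) w ^+ (k * j) *: Cm (A j).
Proof. by rewrite ffunE. Qed.


Lemma Cm_ctr m q (M : 'M[R]_(m, q)) : ctr (Cm M) = Cm (M^T).
Proof. by apply/matrixP => a b; rewrite !(ctrE, mxE) conjc_real. Qed.

Lemma CmM m q r (M : 'M[R]_(m, q)) (N : 'M[R]_(q, r)) : Cm (M *m N) = Cm M *m Cm N.
Proof. exact: (map_mxM (real_complex R)). Qed.

Lemma Cm_sum m q (F : 'I_l -> 'M[R]_(m, q)) : Cm (\sum_j F j) = \sum_j Cm (F j).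
Proof. by apply/matrixP => a b; rewrite !(summxE, mxE) rmorph_sum; apply: eq_bigr => k _; rewrite mxE. Qed.

Lemma w_addm (k a j : 'I_l) : w ^+ (k * ord_addm a j) = w ^+ (k * a) * w ^+ (k * j).
Proof. by rewrite omega_mod //= modnMmr -omega_mod // -exprD mulnDr. Qed.

Lemma tdft_mul m q r (A : tensor R m q l) (B : tensor R q r l) k :
  tdft (tprod A B) k = tdft A k *m tdft B k.
Proof.
rewrite !tdftE mulmx_suml.
under eq_bigr do rewrite ffunE Cm_sum scaler_sumr.
rewrite exchange_big /=.
under [RHS]eq_bigr do rewrite mulmx_sumr.
rewrite [RHS]exchange_big /=; apply: eq_bigr => j _.
rewrite (reindex_inj (addm_inj (j:=j))) /=; apply: eq_bigr => a _.
by rewrite subm_addm CmM w_addm -scalemxAl -scalemxAr scalerA.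
Qed.


Lemma ctr_sum m q (F : 'I_l -> 'M[R[i]]_(m, q)) : ctr (\sum_j F j) = \sum_j ctr (F j).
Proof. by apply/matrixP => a b; rewrite !(summxE, ctrE) rmorph_sum; apply: eq_bigr => k _; rewrite ctrE. Qed.

Lemma ctrZ m q c (M : 'M[R[i]]_(m, q)) : ctr (c *: M) = conjc c *: ctr M.
Proof. by apply/matrixP => a b; rewrite !(mxE, ctrE) rmorphM. Qed.

Lemma tdft_tr m q (A : tensor R m q l) k : tdft (ttr A) k = ctr (tdft A k).
Proof.
rewrite !tdftE ctr_sum (reindex_inj negm_inj) /=.
apply: eq_bigr => a _; rewrite ffunE negmK ctrZ Cm_ctr; congr (_ *: _).
by rewrite (@omega_conj R l l0 _ (k * ord_negm a)) // -mulnDr dvdn_mull // dvd_negm.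
Qed.

Lemma tdft_id q k : tdft (tid R q l) k = 1%:M.
Proof.
rewrite tdftE (bigD1 z0) //= big1 ?addr0.
  by rewrite ffunE /= muln0 expr0 scale1r (map_mx1 (real_complex R)).
move=> j hj; rewrite ffunE; case: ifP => h.
  by case/eqP: hj; apply/val_inj; rewrite /= (eqP h).
by rewrite (map_mx0 (real_complex R)) scaler0.
Qed.

Lemma dvd_shift (j j' : 'I_l) : (l %| l - j' + j)%N = (j == j').
Proof.
apply/idP/eqP => [|->]; last by rewrite subnK ?dvdnn // ltnW.
move/dvdnP => [c hc]; apply/val_inj => /=.
have hj := ltn_ord j; have hj' := ltn_ord j'.
case: c hc => [|c] hc; first lia.
case: c hc => [|c] hc; first lia.
nia.
Qed.

Lemma tdft_inv m q (A : tensor R m q l) (j' : 'I_l) :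
  \sum_(k < l) w ^+ (k * (l - j')) *: tdft A k = l%:R *: Cm (A j').
Proof.
under eq_bigr do rewrite tdftE scaler_sumr.
rewrite exchange_big /=.
under eq_bigr do (under eq_bigr do rewrite scalerA -exprD -mulnDr; rewrite -scaler_suml sum_omega //).
rewrite (bigD1 j') //= big1 ?addr0; first by rewrite subnK ?dvdnn // ltnW.
by move=> j hj; rewrite dvd_shift (negbTE hj) scale0r.
Qed.

Lemma tdft_inj m q (A B : tensor R m q l) :
  (forall k, tdft A k = tdft B k) -> A = B.
Proof.
move=> h; apply/ffunP => j.
have := tdft_inv A j; under eq_bigr do rewrite h; rewrite tdft_inv.
have hl : (l%:R : R[i]) != 0 by rewrite pnatr_eq0 -lt0n.
by move/(scalerI hl)/(map_mx_inj (f := real_complex R)).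
Qed.

Lemma tinner_tr m q (A B : tensor R m q l) : tinner A B = \tr (tprod (ttr A) B z0).
Proof.
rewrite /tinner ffunE /mxtrace.
under [RHS]eq_bigr do rewrite summxE.
rewrite [RHS]exchange_big /=; apply: eq_bigr => k _.
rewrite ffunE negm_subm0.
under [RHS]eq_bigr do rewrite mxE.
rewrite [RHS]exchange_big /=; apply: eq_bigr => a _.
by apply: eq_bigr => b _; rewrite mxE.
Qed.

Lemma tinner_dft m q (A B : tensor R m q l) :
  (l%:R * tinner A B)%:C = \sum_(k < l) \tr (ctr (tdft A k) *m tdft B k).
Proof.
under eq_bigr do rewrite -tdft_tr -tdft_mul.
set X := tprod (ttr A) B.
have h := tdft_inv X z0.
have e : \sum_(k < l) tdft X k = l%:R *: Cm (X z0).
  rewrite -h; apply: eq_bigr => k _.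
  have /eqP hk : (l %| k * (l - z0))%N by rewrite /= subn0 dvdn_mull.
  by rewrite omega_mod // hk expr0 scale1r.
rewrite -raddf_sum /= e mxtraceZ tinner_tr -/X rmorphM rmorph_nat.
congr (_ * _); rewrite /mxtrace rmorph_sum; apply: eq_bigr => a _.
by rewrite mxE.
Qed.

End DFT.

Section Key.
Variable R : realType.

Lemma conj_ge0_id (x : R[i]) : 0 <= x -> conjc x = x.
Proof. by case: x => a b; rewrite lecE /= => /andP [/eqP -> _]; rewrite /= oppr0. Qed.

Lemma tr_ctr m (X : 'M[R[i]]_m) : \tr (ctr X) = conjc (\tr X).
Proof. by rewrite /mxtrace rmorph_sum; apply: eq_bigr => a _; rewrite ctrE. Qed.

Lemma ctrctr_ge0 m q (Z : 'M[R[i]]_(m, q)) a : 0 <= (ctr Z *m Z) a a.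
Proof.
rewrite mxE; apply: sumr_ge0 => r _; rewrite ctrE mulrC; exact: mulcJ_ge0.
Qed.

Lemma key n p (Uh Ph : 'M[R[i]]_(n, p)) (Sh Vh : 'M[R[i]]_p) :
  ctr Uh *m Uh = 1%:M -> ctr Vh *m Vh = 1%:M -> ctr Ph *m Ph = 1%:M ->
  is_diag_mx Sh -> (forall a, 0 <= Sh a a) ->
  forall d, d = \tr (ctr (Uh *m Sh *m ctr Vh) *m (Uh *m ctr Vh))
         - \tr (ctr (Uh *m Sh *m ctr Vh) *m Ph) ->
  0 <= d + conjc d.
Proof.
move=> hU hV hP /is_diag_mxP hd hs d hdd.
have hS : ctr Sh = Sh.
  apply/matrixP => a b; rewrite ctrE.
  case: (eqVneq a b) => [->|hab]; first by rewrite conj_ge0_id.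
  by rewrite !hd ?rmorph0 // eq_sym.
have htr : forall B : 'M[R[i]]_(n, p),
    \tr (ctr (Uh *m Sh *m ctr Vh) *m B) = \tr (Sh *m (ctr Uh *m B *m Vh)).
  by move=> B; rewrite !ctrM ctrK hS -mulmxA mxtrace_mulC !mulmxA.
set Y := Ph *m Vh.
set Q := ctr Uh *m Y.
have hG : ctr Uh *m (Uh *m ctr Vh) *m Vh = 1%:M by rewrite !mulmxA hU mul1mx hV.
have hd1 : d = \tr (Sh *m (1%:M - Q)).
  rewrite hdd !htr hG mulmxBr linearB /= /Q /Y !mulmxA; done.
have hM : (1%:M - Q) + ctr (1%:M - Q) = ctr (Uh - Y) *m (Uh - Y).
  rewrite ctrB ctr1 /Q ctrM !ctrB mulmxBl !mulmxBr hU.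
  have -> : ctr Y *m Y = 1%:M by rewrite /Y ctrM mulmxA -(mulmxA (ctr Vh)) hP mulmx1 hV.
  by rewrite ctrK opprB.
have -> : d + conjc d = \tr (Sh *m ctr (Uh - Y) *m (Uh - Y)).
  rewrite -mulmxA -hM mulmxDr mxtraceD hd1; congr (_ + _).
  by rewrite -tr_ctr ctrM hS mxtrace_mulC.
rewrite /mxtrace; apply: sumr_ge0 => a _.
rewrite -mulmxA mxE (bigD1 a) //= big1 ?addr0.
  by apply: mulr_ge0 => //; apply: ctrctr_ge0.
by move=> b hb; rewrite hd ?mul0r // eq_sym.
Qed.
End Key.

Local Close Scope complex_scope.

Theorem mainTheorem17 (R : realType) (n p l : nat)
  (A : tensor R n p l) (U : tensor R n p l) (S V : tensor R p p l) :
  (p <= n)%N ->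
  compact_tSVD A U S V ->
  tStiefel (tprod U (ttr V)) /\
  (forall P : tensor R n p l, tStiefel P -> tinner A P <= tinner A (tprod U (ttr V))).
Proof.
move=> _ [hU [hV1 hV2] _ hS hA].
case: (posnP l) => [l0 | lpos].
  subst l; split; first by apply/ffunP => -[k hk].
  by move=> P _; rewrite /tinner !big_ord0.
have hUh k : ctr (tdft U k) *m tdft U k = 1%:M.
  by rewrite -tdft_tr // -tdft_mul // hU tdft_id.
have hVh k : ctr (tdft V k) *m tdft V k = 1%:M.
  by rewrite -tdft_tr // -tdft_mul // hV1 tdft_id.
have hVh' k : tdft V k *m ctr (tdft V k) = 1%:M.
  by rewrite -tdft_tr // -tdft_mul // hV2 tdft_id.
split.
  apply: (tdft_inj lpos) => k.
  rewrite tdft_mul // tdft_tr // !tdft_mul // tdft_tr // tdft_id ?lpos //. rewrite (ctrM (tdft U k)).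
by rewrite ctrK mulmxA -(mulmxA (tdft V k)) hUh mulmx1 hVh'.
move=> P hP.
have hPh k : ctr (tdft P k) *m tdft P k = 1%:M.
  by rewrite -tdft_tr // -tdft_mul // hP tdft_id.
set G := tprod U (ttr V).
have hAk k : tdft A k = tdft U k *m tdft S k *m ctr (tdft V k).
  by rewrite hA !tdft_mul // tdft_tr.
have hGk k : tdft G k = tdft U k *m ctr (tdft V k).
  by rewrite /G tdft_mul // tdft_tr.
set D := ((l%:R * (tinner A G - tinner A P))%:C%C : R[i]).
have hD : D = \sum_(k < l) (\tr (ctr (tdft A k) *m tdft G k) - \tr (ctr (tdft A k) *m tdft P k)).
  by rewrite sumrB -!tinner_dft // -rmorphB -mulrBr.
have h1 : 0 <= D + conjc D.
  rewrite hD rmorph_sum -big_split /=; apply: sumr_ge0 => k _.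
  apply: (key (hUh k) (hVh k) (hPh k) (proj1 (hS k)) (proj2 (hS k))).
  by rewrite hAk hGk.
move: h1; rewrite /D conjc_real -rmorphD ler0c => h.
have hl : (0 : R) < l%:R by rewrite ltr0n.
nra.
Qed.
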